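(* The operator $\frac1\lambda P$ maps $\Delta_f$ into itself.
   Context: Let $I=[0,1)$ carry a metric $d_I$, fix $\theta\in(0,1)$, and let $\Omega=I^{\mathbb Z}$ with metric $d(x,y)=\sup_{k\in\mathbb Z}\theta^{|k|}d_I(x_k,y_k)$. Let $\tau:I\to I$ have full branches, so that $b=\#\tau^{-1}(t)$ is constant; let $p_\tau$ be a fixed point of $\tau$. Assume there is $\eta\in(0,1)$ such that every inverse branch $\zeta$ of $\tau$ satisfies $d_I(\zeta(s),\zeta(t))\le\eta\,d_I(s,t)$. Let $(\bar\tau x)_i=\tau(x_i)$. Let $\pi_k:\Omega\to\Omega$ keep the coordinates $|i|\le k$ and set the others to $p_\tau$; $\Phi_k=\Phi\circ\pi_k$. Fix $\beta\in(0,1]$; $|\Phi|_\infty=\sup|\Phi|$, $|\Phi|_\beta=\sup_{k\in\mathbb N}\sup_{x\neq y}|\Phi_k(x)-\Phi_k(y)|/d(x,y)^\beta$, $\|\Phi\|=|\Phi|_\infty+|\Phi|_\beta$, $\mathcal C=\{\Phi\in C(\Omega):\|\Phi\|<\infty\}$. An inverse branch of order $k$ is a choice $\zeta=(\zeta_j)_{|j|\le k}$ of inverse branches of $\tau$, with $(\zeta_x)_j=\zeta_j(x_j)$ for $|j|\le k$, $(\zeta_x)_j=x_j$ otherwise; $b_k=b^{2k+1}$. For real $f\in\mathcal C$, $P_k\Phi(x)=b_k^{-1}\sum_{|\zeta|=k}e^{f(\pi_k\zeta_x)}\Phi(\pi_k\zeta_x)$ and $P\Phi=\lim_kP_k\Phi$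 pointwise. Fix a Borel probability measure $\nu_0$ on $\Omega$ with $P^*\nu_0=\lambda\nu_0$, where $\lambda=\int P\mathbf 1\,d\nu_0$ (such exists). Put $B(z)=\exp\!\left(|f|_\beta\frac{\eta^\beta}{1-\eta^\beta}z^\beta\right)$ for $z\ge0$ and $\Delta_f=\{\Phi\in C(\Omega):\Phi\ge0,\ \nu_0(\Phi)=1,\ \Phi(x)\le B(d(x,y))\Phi(y)\ \forall x,y\in\Omega\}$. *)

(* Defs.v *)
From Stdlib Require Import Reals Lra ZArith List Classical ClassicalEpsilon.
Open Scope R_scope.

Definition inI (t : R) : Prop := 0 <= t < 1.

Definition pt := Z -> R.
Definition inOmega (x : pt) : Prop := forall k : Z, inI (x k).

(* Supremum of a set of reals (meaningful when the least upper bound exists). *)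
Definition Rsup (E : R -> Prop) : R :=
  epsilon (inhabits 0) (fun r => is_lub E r).

Definition dOmega (dI : R -> R -> R) (theta : R) (x y : pt) : R :=
  Rsup (fun r => exists k : Z, r = theta ^ (Z.abs_nat k) * dI (x k) (y k)).

(* z^beta for z >= 0, with 0^beta = 0. *)
Definition rpow (z beta : R) : R :=
  if Rle_dec z 0 then 0 else Rpower z beta.

Definition pik (p : R) (k : nat) (x : pt) : pt :=
  fun i => if Z.leb (Z.abs i) (Z.of_nat k) then x i else p.

Definition contOmega (dI : R -> R -> R) (theta : R) (Phi : pt -> R) : Prop :=
  forall x, inOmega x -> forall eps, eps > 0 -> exists delta, delta > 0 /\
    forall y, inOmega y -> dOmega dI theta x y < delta -> Rabs (Phi y - Phi x) < eps.

Definition boundedOmega (Phi : pt -> R) : Prop :=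
  exists M, forall x, inOmega x -> Rabs (Phi x) <= M.

Definition holderQuot (dI : R -> R -> R) (theta beta p : R) (Phi : pt -> R) (r : R) : Prop :=
  r = 0 \/
  exists (k : nat) (x y : pt), inOmega x /\ inOmega y /\ (exists j, x j <> y j) /\
    r = Rabs (Phi (pik p k x) - Phi (pik p k y)) / rpow (dOmega dI theta x y) beta.

Definition holderSemi (dI : R -> R -> R) (theta beta p : R) (Phi : pt -> R) : R :=
  Rsup (holderQuot dI theta beta p Phi).

Definition inCspace (dI : R -> R -> R) (theta beta p : R) (Phi : pt -> R) : Prop :=
  contOmega dI theta Phi /\ boundedOmega Phi /\
  exists C, forall r, holderQuot dI theta beta p Phi r -> r <= C.

Fixpoint natsum (n : nat) (g : nat -> R) : R :=
  match n with O => 0 | S m => natsum m g + g m end.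

(* Sum of F c over all choices c : Z -> nat with c j < b for j in idx
   (c j := 0 for j not in idx). *)
Fixpoint sumChoices (b : nat) (idx : list Z) (F : (Z -> nat) -> R) : R :=
  match idx with
  | nil => F (fun _ => O)
  | j :: rest => natsum b (fun i =>
      sumChoices b rest (fun c => F (fun m => if Z.eq_dec m j then i else c m)))
  end.

Definition idxk (k : nat) : list Z :=
  map (fun i => Z.of_nat i - Z.of_nat k)%Z (seq 0 (2 * k + 1)).

(* pi_k zeta_x for the inverse branch of order k given by the choice c
   (branch br (c j) at coordinate j). *)
Definition branchPt (br : nat -> R -> R) (p : R) (k : nat) (c : Z -> nat) (x : pt) : pt :=
  pik p k (fun j => if Z.leb (Z.abs j) (Z.of_nat k) then br (c j) (x j) else x j).

Definition Pk (b : nat) (br : nat -> R -> R) (p : R) (f : pt -> R)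
    (k : nat) (Phi : pt -> R) (x : pt) : R :=
  / (INR b ^ (2 * k + 1)) *
  sumChoices b (idxk k)
    (fun c => exp (f (branchPt br p k c x)) * Phi (branchPt br p k c x)).

Definition openOmega (dI : R -> R -> R) (theta : R) (U : pt -> Prop) : Prop :=
  forall x, U x -> inOmega x /\ exists r, r > 0 /\
    forall y, inOmega y -> dOmega dI theta x y < r -> U y.

Inductive borel (dI : R -> R -> R) (theta : R) : (pt -> Prop) -> Prop :=
  | borel_open : forall U, openOmega dI theta U -> borel dI theta U
  | borel_compl : forall A, borel dI theta A ->
      borel dI theta (fun x => inOmega x /\ ~ A x)
  | borel_union : forall A : nat -> pt -> Prop, (forall n, borel dI theta (A n)) ->
      borel dI theta (fun x => exists n, A n x).

Definition probMeasure (dI : R -> R -> R) (theta : R) (nu : (pt -> Prop) -> R) : Prop :=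
  (forall A, borel dI theta A -> 0 <= nu A) /\
  nu inOmega = 1 /\
  (forall A : nat -> pt -> Prop, (forall n, borel dI theta (A n)) ->
     (forall n m x, n <> m -> A n x -> A m x -> False) ->
     infinite_sum (fun n => nu (A n)) (nu (fun x => exists n, A n x))).

Definition simpleBelow (dI : R -> R -> R) (theta : R) (nu : (pt -> Prop) -> R)
    (Phi : pt -> R) (s : R) : Prop :=
  exists (n : nat) (a : nat -> R) (A : nat -> pt -> Prop),
    (forall i, (i < n)%nat -> 0 <= a i /\ borel dI theta (A i)) /\
    (forall i j x, (i < n)%nat -> (j < n)%nat -> i <> j -> A i x -> A j x -> False) /\
    (forall x, inOmega x ->
       natsum n (fun i => a i * (if excluded_middle_informative (A i x) then 1 else 0))
       <= Phi x) /\
    s = natsum n (fun i => a i * nu (A i)).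

(* integral_Omega Phi dnu = c, for a nonnegative Borel measurable Phi
   (Lebesgue integral; here required to be finite). *)
Definition integralIs (dI : R -> R -> R) (theta : R) (nu : (pt -> Prop) -> R)
    (Phi : pt -> R) (c : R) : Prop :=
  (forall x, inOmega x -> 0 <= Phi x) /\
  (forall a, borel dI theta (fun x => inOmega x /\ a < Phi x)) /\
  is_lub (simpleBelow dI theta nu Phi) c.

Definition Bfun (fsemi eta beta z : R) : R :=
  exp (fsemi * (Rpower eta beta / (1 - Rpower eta beta)) * rpow z beta).

Definition inDelta (dI : R -> R -> R) (theta beta p eta : R) (f : pt -> R)
    (nu : (pt -> Prop) -> R) (Phi : pt -> R) : Prop :=
  contOmega dI theta Phi /\
  (forall x, inOmega x -> 0 <= Phi x) /\
  integralIs dI theta nu Phi 1 /\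
  (forall x y, inOmega x -> inOmega y ->
     Phi x <= Bfun (holderSemi dI theta beta p f) eta beta (dOmega dI theta x y) * Phi y).

(* Main.v *)
Require Import Defs.
From Stdlib Require Import Reals ZArith List.
From Stdlib Require Import Lra Lia FunctionalExtensionality PropExtensionality ClassicalEpsilon Classical.
Open Scope R_scope.

Lemma natsum_ext n g h : (forall i, (i < n)%nat -> g i = h i) -> natsum n g = natsum n h.
Proof. induction n; simpl; intros H; auto. rewrite IHn by (intros; apply H; lia). rewrite H by lia. auto. Qed.

Lemma natsum_le n g h : (forall i, (i < n)%nat -> g i <= h i) -> natsum n g <= natsum n h.
Proof. induction n; simpl; intros H; [lra|]. assert (natsum n g <= natsum n h) by (apply IHn; intros; apply H; lia).
 assert (g n <= h n) by (apply H; lia). lra. Qed.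

Lemma natsum_scal n a g : natsum n (fun i => a * g i) = a * natsum n g.
Proof. induction n; simpl; [ring|]. rewrite IHn; ring. Qed.

Lemma natsum_const n v : natsum n (fun _ => v) = INR n * v.
Proof. induction n; simpl natsum; [simpl; ring|]. rewrite IHn, S_INR; ring. Qed.

Definition validc (b : nat) (idx : list Z) (c : Z -> nat) := forall j, In j idx -> (c j < b)%nat.

Lemma sumChoices_le b idx : forall F G, (forall c, validc b idx c -> F c <= G c) ->
  sumChoices b idx F <= sumChoices b idx G.
Proof.
  induction idx as [|j rest IH]; simpl; intros F G H.
  - apply H. intros j [].
  - apply natsum_le. intros i Hi. apply IH. intros c Hc. apply H.
    intros m Hm. destruct (Z.eq_dec m j); auto.
    destruct Hm as [<-|Hm]; [congruence|auto].
Qed.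

Lemma sumChoices_scal b idx : forall a F,
  sumChoices b idx (fun c => a * F c) = a * sumChoices b idx F.
Proof.
  induction idx as [|j rest IH]; simpl; intros a F; auto.
  rewrite <- natsum_scal. apply natsum_ext; intros. apply IH.
Qed.

Lemma sumChoices_const b idx v : sumChoices b idx (fun _ => v) = INR b ^ length idx * v.
Proof.
  revert v; induction idx as [|j rest IH]; simpl; intros v; [ring|].
  rewrite (natsum_ext _ _ (fun _ => INR b ^ length rest * v)) by (intros; apply IH).
  rewrite natsum_const; ring.
Qed.

Lemma sumChoices_lower b idx F m : (forall c, validc b idx c -> m <= F c) ->
  INR b ^ length idx * m <= sumChoices b idx F.
Proof. intros H. rewrite <- sumChoices_const. apply sumChoices_le. auto. Qed.

Lemma cv_const (a : R) : Un_cv (fun _ => a) a.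
Proof. intros e He. exists O. intros. unfold Rfunctions.R_dist. rewrite Rminus_diag, Rabs_R0; lra. Qed.

Lemma cv_lower u l m : Un_cv u l -> (forall n, m <= u n) -> m <= l.
Proof. intros H1 H2. eapply Rle_cv_lim; [|apply cv_const|apply H1]; simpl; auto. Qed.

Lemma cv_le u v l1 l2 K : Un_cv u l1 -> Un_cv v l2 -> (forall n, u n <= K * v n) -> l1 <= K * l2.
Proof. intros H1 H2 H. eapply Rle_cv_lim; [|apply H1|apply (CV_mult (fun _ => K) v); [apply cv_const|apply H2]]; simpl; auto. Qed.

Lemma length_idxk k : length (idxk k) = (2 * k + 1)%nat.
Proof. unfold idxk. rewrite length_map, length_seq. auto. Qed.

Lemma In_idxk k j : (Z.abs j <= Z.of_nat k)%Z -> In j (idxk k).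
Proof.
  intros H. unfold idxk. apply in_map_iff. exists (Z.to_nat (j + Z.of_nat k)). split.
  - rewrite Z2Nat.id by lia. lia.
  - apply in_seq. lia.
Qed.

Lemma pow_le1 t n : 0 <= t <= 1 -> t ^ n <= 1.
Proof. intros H; induction n; simpl; nra. Qed.
Lemma pow_pos' t n : 0 < t -> 0 < t ^ n.
Proof. intros; apply pow_lt; auto. Qed.

Definition dset (dI : R -> R -> R) theta (x y : pt) :=
  fun r => exists k : Z, r = theta ^ (Z.abs_nat k) * dI (x k) (y k).

Section Metric.
Variables (dI : R -> R -> R) (theta M : R).
Hypothesis HdI0 : forall s t, inI s -> inI t -> 0 <= dI s t.
Hypothesis HM : forall s t, inI s -> inI t -> dI s t <= M.
Hypothesis Htheta : 0 < theta < 1.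

Lemma M_nonneg : 0 <= M.
Proof. assert (inI 0) by (unfold inI; lra). specialize (HdI0 0 0 H H). specialize (HM 0 0 H H). lra. Qed.

Lemma d_lub x y : inOmega x -> inOmega y -> is_lub (dset dI theta x y) (dOmega dI theta x y).
Proof.
  intros Hx Hy. unfold dOmega, Rsup. apply epsilon_spec. apply upper_bound_thm.
  - exists M. pose proof M_nonneg. intros r [k ->]. pose proof (pow_le1 theta (Z.abs_nat k) ltac:(lra)).
    pose proof (pow_pos' theta (Z.abs_nat k) ltac:(lra)).
    specialize (HdI0 _ _ (Hx k) (Hy k)). specialize (HM _ _ (Hx k) (Hy k)). nra.
  - exists (theta ^ (Z.abs_nat 0) * dI (x 0%Z) (y 0%Z)). exists 0%Z; auto.
Qed.

Lemma d_elem x y k : inOmega x -> inOmega y ->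
  theta ^ (Z.abs_nat k) * dI (x k) (y k) <= dOmega dI theta x y.
Proof. intros Hx Hy. apply (d_lub x y Hx Hy). exists k; auto. Qed.

Lemma d_nonneg x y : inOmega x -> inOmega y -> 0 <= dOmega dI theta x y.
Proof. intros Hx Hy. pose proof (d_elem x y 0 Hx Hy). simpl in H.
  specialize (HdI0 _ _ (Hx 0%Z) (Hy 0%Z)). lra. Qed.

Lemma d_le_M x y : inOmega x -> inOmega y -> dOmega dI theta x y <= M.
Proof. intros Hx Hy. pose proof M_nonneg. apply (d_lub x y Hx Hy). intros r [k ->].
  pose proof (pow_le1 theta (Z.abs_nat k) ltac:(lra)).
    pose proof (pow_pos' theta (Z.abs_nat k) ltac:(lra)).
    specialize (HdI0 _ _ (Hx k) (Hy k)). specialize (HM _ _ (Hx k) (Hy k)). nra.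
Qed.

Lemma d_upper x y u : inOmega x -> inOmega y ->
  (forall k, theta ^ (Z.abs_nat k) * dI (x k) (y k) <= u) -> dOmega dI theta x y <= u.
Proof. intros Hx Hy H. apply (d_lub x y Hx Hy). intros r [k ->]. auto. Qed.

Lemma d_sym x y : (forall s t, inI s -> inI t -> dI s t = dI t s) -> inOmega x -> inOmega y ->
  dOmega dI theta x y = dOmega dI theta y x.
Proof. intros Hs Hx Hy. apply Rle_antisym; apply d_upper; auto; intros k;
  rewrite Hs by auto; apply d_elem; auto. Qed.
End Metric.

Lemma Rpower_pos x y : 0 < Rpower x y.
Proof. unfold Rpower. apply exp_pos. Qed.

Lemma rpow_nonneg z be : 0 <= rpow z be.
Proof. unfold rpow. destruct (Rle_dec z 0); [lra|]. pose proof (Rpower_pos z be); lra. Qed.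

Lemma rpow_pos z be : 0 < z -> 0 < rpow z be.
Proof. intros. unfold rpow. destruct (Rle_dec z 0); [lra|]. apply Rpower_pos. Qed.

Lemma rpow_mono a b be : 0 < be -> 0 <= a <= b -> rpow a be <= rpow b be.
Proof. intros Hb H. unfold rpow. destruct (Rle_dec a 0).
  - destruct (Rle_dec b 0); [lra|]. pose proof (Rpower_pos b be); lra.
  - destruct (Rle_dec b 0); [lra|]. apply Rle_Rpower_l; lra. Qed.

Lemma rpow_mult e d be : 0 < e -> 0 <= d -> rpow (e * d) be = Rpower e be * rpow d be.
Proof. intros He Hd. unfold rpow. destruct (Rle_dec d 0).
  - assert (d = 0) by lra. subst. rewrite Rmult_0_r. destruct (Rle_dec 0 0); [ring|lra].
  - destruct (Rle_dec (e*d) 0). { nra. } rewrite Rpower_mult_distr; lra. Qed.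

Lemma Rpower_lt1 e be : 0 < e < 1 -> 0 < be -> Rpower e be < 1.
Proof. intros. unfold Rpower. rewrite <- exp_0. apply exp_increasing.
  assert (ln e < 0). { rewrite <- ln_1. apply ln_increasing; lra. } nra. Qed.

Lemma Bfun_mono s eta be a b : 0 <= s -> 0 < eta < 1 -> 0 < be -> 0 <= a <= b ->
  Bfun s eta be a <= Bfun s eta be b.
Proof. intros Hs He Hb Hab. unfold Bfun.
  pose proof (Rpower_lt1 eta be He Hb). pose proof (Rpower_pos eta be).
  set (E := Rpower eta be) in *.
  assert (0 <= E / (1 - E)) by (apply Rle_div_r_0 || (unfold Rdiv; apply Rmult_le_pos; [lra| left; apply Rinv_0_lt_compat; lra])).
  pose proof (rpow_mono a b be Hb Hab).
  assert (0 <= s * (E/(1-E))) by (apply Rmult_le_pos; lra).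
  destruct (Rle_lt_or_eq_dec _ _ (Rmult_le_compat_l _ _ _ H3 H2)) as [H5|H5].
  - left; apply exp_increasing; auto.
  - rewrite H5; lra. Qed.

Lemma Bfun_ge1 s eta be z : 0 <= s -> 0 < eta < 1 -> 0 < be -> 1 <= Bfun s eta be z.
Proof. intros. pose proof (Bfun_mono s eta be 0 (Rmax z 0) H H0 H1 ltac:(split;[lra|apply Rmax_r])).
  unfold Bfun in *. unfold rpow at 1 in H2. destruct (Rle_dec 0 0); [|lra].
  rewrite Rmult_0_r, exp_0 in H2.
  unfold rpow in *. destruct (Rle_dec z 0); destruct (Rle_dec (Rmax z 0) 0).
  - rewrite Rmult_0_r, exp_0; lra.
  - exfalso. apply n. unfold Rmax. destruct (Rle_dec z 0); lra.
  - exfalso. assert (z <= Rmax z 0) by apply Rmax_l. lra.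
  - rewrite Rmax_left in H2 by lra. auto. Qed.

Lemma rpow_small be t : 0 < be -> 0 < t -> exists delta, delta > 0 /\
  forall d, d < delta -> rpow d be < t.
Proof. intros Hb Ht. exists (exp (ln t / be)). split; [apply exp_pos|].
  intros d Hd. unfold rpow. destruct (Rle_dec d 0); [lra|].
  unfold Rpower. rewrite <- (exp_ln t Ht). apply exp_increasing.
  assert (ln d < ln t / be). { rewrite <- (ln_exp (ln t / be)). apply ln_increasing; lra. }
  apply (Rmult_lt_compat_l be) in H; auto. unfold Rdiv in H.
  replace (be * (ln t * / be)) with (ln t) in H by (field; lra). lra. Qed.

Lemma simple_scale dI theta nu g h s a : simpleBelow dI theta nu g s -> 0 < a ->
  (forall x, inOmega x -> a * g x <= h x) -> simpleBelow dI theta nu h (a * s).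
Proof.
  intros (n & c & A & H1 & H2 & H3 & ->) Ha Hh.
  exists n, (fun i => a * c i), A. split; [|split; [auto|split]].
  - intros i Hi. destruct (H1 i Hi). split; auto. apply Rmult_le_pos; lra.
  - intros x Hx. eapply Rle_trans; [|apply Hh; auto].
    rewrite (natsum_ext _ _ (fun i => a * (c i * (if excluded_middle_informative (A i x) then 1 else 0)))) by (intros; ring).
    rewrite natsum_scal. apply Rmult_le_compat_l; [lra|]. apply H3; auto.
  - rewrite <- natsum_scal. apply natsum_ext; intros; ring.
Qed.

Lemma integral_scale dI theta nu g c a : integralIs dI theta nu g c -> 0 < a ->
  integralIs dI theta nu (fun x => a * g x) (a * c).
Proof.
  intros (H1 & H2 & H3) Ha. split; [|split].
  - intros x Hx. apply Rmult_le_pos; [lra|auto].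
  - intros t. replace (fun x => inOmega x /\ t < a * g x) with (fun x => inOmega x /\ t / a < g x).
    + apply H2.
    + apply functional_extensionality; intros x. apply propositional_extensionality.
      split; intros [Hx Ht]; split; auto.
      * apply (Rmult_lt_compat_l a) in Ht; auto. unfold Rdiv in Ht.
        replace (a * (t * / a)) with t in Ht by (field; lra). auto.
      * apply (Rmult_lt_reg_l a); auto. unfold Rdiv. replace (a * (t * / a)) with t by (field; lra). auto.
  - split.
    + intros s Hs. assert (simpleBelow dI theta nu g (/ a * s)).
      { apply simple_scale with (g := fun x => a * g x); auto. apply Rinv_0_lt_compat; auto.
        intros x _. right. field. lra. }
      apply (proj1 H3) in H. apply (Rmult_le_compat_l a) in H; [|lra].
      replace (a * (/ a * s)) with s in H by (field; lra). auto.
    + intros u Hu. assert (c <= / a * u).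
      { apply (proj2 H3). intros s Hs. assert (simpleBelow dI theta nu (fun x => a * g x) (a * s)).
        { apply simple_scale with (g := g); auto. intros; lra. }
        apply Hu in H. apply (Rmult_le_compat_l (/ a)) in H; [|left; apply Rinv_0_lt_compat; auto].
        replace (/ a * (a * s)) with s in H by (field; lra). auto. }
      apply (Rmult_le_compat_l a) in H; [|lra].
      replace (a * (/ a * u)) with u in H by (field; lra). auto.
Qed.

Lemma borel_inOmega dI theta : borel dI theta inOmega.
Proof. apply borel_open. intros x Hx. split; auto. exists 1. split; [lra|]. auto. Qed.

Lemma simple_const dI theta nu g m : nu inOmega = 1 -> 0 <= m ->
  (forall x, inOmega x -> m <= g x) -> simpleBelow dI theta nu g m.
Proof.
  intros Hnu Hm H. exists 1%nat, (fun _ => m), (fun _ x => inOmega x). split; [|split; [|split]].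
  - intros i Hi. split; auto. apply borel_inOmega.
  - intros i j x Hi Hj Hij. lia.
  - intros x Hx. simpl. destruct (excluded_middle_informative (inOmega x)); [|tauto].
    specialize (H x Hx). lra.
  - simpl. change (nu (fun x => inOmega x)) with (nu inOmega). rewrite Hnu. ring.
Qed.

Lemma integral_bound dI theta nu g c K : nu inOmega = 1 -> integralIs dI theta nu g c -> 0 < K ->
  (forall x y, inOmega x -> inOmega y -> g x <= K * g y) -> forall x, inOmega x -> g x <= K * c.
Proof.
  intros Hnu (H0 & _ & H3) HK H x Hx.
  assert (g x / K <= c).
  { apply (proj1 H3). apply simple_const; auto.
    - unfold Rdiv. apply Rmult_le_pos; [auto|left; apply Rinv_0_lt_compat; auto].
    - intros y Hy. specialize (H x y Hx Hy). apply (Rmult_le_reg_l K); auto.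
      unfold Rdiv. replace (K * (g x * / K)) with (g x) by (field; lra). auto. }
  apply (Rmult_le_compat_l K) in H1; [|lra]. unfold Rdiv in H1.
  replace (K * (g x * / K)) with (g x) in H1 by (field; lra). auto.
Qed.

Lemma B_small s eta be eps : 0 <= s -> 0 < eta < 1 -> 0 < be -> 0 < eps ->
  exists delta, delta > 0 /\ forall d, d < delta -> Bfun s eta be d < 1 + eps.
Proof.
  intros Hs He Hb Heps. unfold Bfun.
  pose proof (Rpower_lt1 eta be He Hb). pose proof (Rpower_pos eta be).
  set (E := Rpower eta be) in *.
  assert (0 <= E / (1 - E)) by (unfold Rdiv; apply Rmult_le_pos; [lra| left; apply Rinv_0_lt_compat; lra]).
  set (K := s * (E / (1 - E))). assert (0 <= K) by (apply Rmult_le_pos; lra).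
  assert (0 < ln (1 + eps)) by (rewrite <- ln_1; apply ln_increasing; lra).
  set (t := ln (1 + eps) / (K + 1)).
  assert (0 < t) by (unfold t, Rdiv; apply Rmult_lt_0_compat; [auto|apply Rinv_0_lt_compat; lra]).
  destruct (rpow_small be t Hb H4) as (delta & Hd & Hr). exists delta. split; auto.
  intros d Hdd. specialize (Hr d Hdd). pose proof (rpow_nonneg d be).
  rewrite <- (exp_ln (1 + eps)) by lra. apply exp_increasing.
  assert (K * rpow d be <= K * t) by (apply Rmult_le_compat_l; lra).
  assert (K * t < ln (1 + eps)).
  { unfold t. unfold Rdiv. apply (Rmult_lt_reg_r (K + 1)); [lra|].
    replace (K * (ln (1 + eps) * / (K + 1)) * (K + 1)) with (K * ln (1 + eps)) by (field; lra). nra. }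
  lra.
Qed.

Lemma cont_from_ineq dI theta s eta be g G :
  0 <= s -> 0 < eta < 1 -> 0 < be -> 0 < G ->
  (forall x, inOmega x -> 0 <= g x) -> (forall x, inOmega x -> g x <= G) ->
  (forall x y, inOmega x -> inOmega y -> dOmega dI theta x y = dOmega dI theta y x) ->
  (forall x y, inOmega x -> inOmega y -> 1 <= Bfun s eta be (dOmega dI theta x y)) ->
  (forall x y, inOmega x -> inOmega y -> g x <= Bfun s eta be (dOmega dI theta x y) * g y) ->
  contOmega dI theta g.
Proof.
  intros Hs He Hb HG H0 HGb Hsym H1 H x Hx eps Heps.
  destruct (B_small s eta be (eps / G) Hs He Hb) as (delta & Hd & HB).
  { unfold Rdiv; apply Rmult_lt_0_compat; [lra|apply Rinv_0_lt_compat; lra]. }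
  exists delta. split; auto. intros y Hy Hxy.
  specialize (HB _ Hxy). pose proof (H1 x y Hx Hy).
  set (Bd := Bfun s eta be (dOmega dI theta x y)) in *.
  pose proof (H x y Hx Hy). pose proof (H y x Hy Hx). rewrite <- Hsym in H4 by auto. fold Bd in H4.
  assert ((Bd - 1) * G < eps).
  { apply (Rmult_lt_compat_r G) in HB; auto. unfold Rdiv in HB.
    replace ((1 + eps * / G) * G) with (G + eps) in HB by (field; lra). lra. }
  pose proof (H0 x Hx). pose proof (H0 y Hy). pose proof (HGb x Hx). pose proof (HGb y Hy).
  assert ((Bd - 1) * g x <= (Bd - 1) * G) by (apply Rmult_le_compat_l; lra).
  assert ((Bd - 1) * g y <= (Bd - 1) * G) by (apply Rmult_le_compat_l; lra).
  replace ((Bd - 1) * g x) with (Bd * g x - g x) in H9 by ring.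
  replace ((Bd - 1) * g y) with (Bd * g y - g y) in H10 by ring.
  fold Bd in H3. apply Rabs_def1; lra.
Qed.

Section Core.
Variables (dI : R -> R -> R) (theta : R) (b : nat) (br : nat -> R -> R)
  (ptau eta beta M C : R) (f : pt -> R).
Hypothesis HdI0 : forall s t, inI s -> inI t -> 0 <= dI s t.
Hypothesis HdIeq : forall s t, inI s -> inI t -> (dI s t = 0 <-> s = t).
Hypothesis HM : forall s t, inI s -> inI t -> dI s t <= M.
Hypothesis Htheta : 0 < theta < 1.
Hypothesis Hbr_in : forall i t, (i < b)%nat -> inI t -> inI (br i t).
Hypothesis Hpt : inI ptau.
Hypothesis Heta : 0 < eta < 1.
Hypothesis Hcontr : forall i s t, (i < b)%nat -> inI s -> inI t ->
               dI (br i s) (br i t) <= eta * dI s t.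
Hypothesis Hbeta : 0 < beta <= 1.
Hypothesis HC : forall r, holderQuot dI theta beta ptau f r -> r <= C.

Lemma branchPt_in k c x : validc b (idxk k) c -> inOmega x -> inOmega (branchPt br ptau k c x).
Proof. intros Hc Hx j. unfold branchPt, pik. destruct (Z.leb (Z.abs j) (Z.of_nat k)) eqn:E; auto.
  apply Hbr_in; auto. apply Hc. apply In_idxk. apply Z.leb_le; auto. Qed.

Lemma d_branch k c x y : validc b (idxk k) c -> inOmega x -> inOmega y ->
  dOmega dI theta (branchPt br ptau k c x) (branchPt br ptau k c y) <= eta * dOmega dI theta x y.
Proof.
  intros Hc Hx Hy. apply (d_upper dI theta M); auto; try (apply branchPt_in; auto).
  intros j. pose proof (d_elem dI theta M HdI0 HM Htheta x y j Hx Hy).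
  pose proof (pow_pos' theta (Z.abs_nat j) ltac:(lra)).
  pose proof (d_nonneg dI theta M HdI0 HM Htheta x y Hx Hy).
  unfold branchPt, pik. destruct (Z.leb (Z.abs j) (Z.of_nat k)) eqn:E.
  - assert (c j < b)%nat by (apply Hc; apply In_idxk; apply Z.leb_le; auto).
    pose proof (Hcontr (c j) (x j) (y j) H2 (Hx j) (Hy j)).
    assert (theta ^ Z.abs_nat j * dI (br (c j) (x j)) (br (c j) (y j)) <=
            theta ^ Z.abs_nat j * (eta * dI (x j) (y j))) by (apply Rmult_le_compat_l; lra).
    nra.
  - replace (dI ptau ptau) with 0 by (symmetry; apply HdIeq; auto). nra.
Qed.

Lemma pik_branch k c x : pik ptau k (branchPt br ptau k c x) = branchPt br ptau k c x.
Proof. apply functional_extensionality; intros j. unfold branchPt, pik.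
  destruct (Z.leb (Z.abs j) (Z.of_nat k)); auto. Qed.

Definition hs := holderSemi dI theta beta ptau f.

Lemma hs_lub : is_lub (holderQuot dI theta beta ptau f) hs.
Proof. unfold hs, holderSemi, Rsup. apply epsilon_spec. apply upper_bound_thm.
  - exists C. auto.
  - exists 0. left; auto. Qed.

Lemma hs_nonneg : 0 <= hs.
Proof. apply hs_lub. left; auto. Qed.

Lemma f_diff k u v : inOmega u -> inOmega v -> pik ptau k u = u -> pik ptau k v = v ->
  f u - f v <= hs * rpow (dOmega dI theta u v) beta.
Proof.
  intros Hu Hv Eu Ev.
  pose proof hs_nonneg. pose proof (rpow_nonneg (dOmega dI theta u v) beta).
  destruct (classic (exists j, u j <> v j)) as [[j Hj]|Hn].
  - assert (0 < dOmega dI theta u v).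
    { pose proof (d_elem dI theta M HdI0 HM Htheta u v j Hu Hv).
      pose proof (pow_pos' theta (Z.abs_nat j) ltac:(lra)).
      pose proof (HdI0 _ _ (Hu j) (Hv j)).
      assert (dI (u j) (v j) <> 0) by (intros E; apply Hj; apply HdIeq; auto).
      assert (0 < theta ^ Z.abs_nat j * dI (u j) (v j)) by (apply Rmult_lt_0_compat; lra). lra. }
    pose proof (rpow_pos _ beta H1).
    assert (Rabs (f (pik ptau k u) - f (pik ptau k v)) / rpow (dOmega dI theta u v) beta <= hs).
    { apply hs_lub. right. exists k, u, v. split; [auto|split; [auto|split; [exists j; auto|reflexivity]]]. }
    rewrite Eu, Ev in H3. apply (Rmult_le_compat_r (rpow (dOmega dI theta u v) beta)) in H3; [|lra].
    unfold Rdiv in H3. rewrite Rmult_assoc, Rinv_l, Rmult_1_r in H3 by lra.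
    pose proof (Rle_abs (f u - f v)). lra.
  - assert (u = v). { apply functional_extensionality; intros j. apply NNPP; intros E; apply Hn; eauto. }
    subst. nra.
Qed.

Lemma exp_le a b' : a <= b' -> exp a <= exp b'.
Proof. intros [H|H]; [left; apply exp_increasing; auto|subst; lra]. Qed.

Lemma key (Phi : pt -> R) k c x y : validc b (idxk k) c -> inOmega x -> inOmega y ->
  (forall u, inOmega u -> 0 <= Phi u) ->
  (forall u v, inOmega u -> inOmega v -> Phi u <= Bfun hs eta beta (dOmega dI theta u v) * Phi v) ->
  exp (f (branchPt br ptau k c x)) * Phi (branchPt br ptau k c x) <=
  Bfun hs eta beta (dOmega dI theta x y) * (exp (f (branchPt br ptau k c y)) * Phi (branchPt br ptau k c y)).
Proof.
  intros Hc Hx Hy HP0 HPB.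
  pose proof (branchPt_in k c x Hc Hx) as Hbx. pose proof (branchPt_in k c y Hc Hy) as Hby.
  set (bx := branchPt br ptau k c x) in *. set (by' := branchPt br ptau k c y) in *.
  pose proof (d_branch k c x y Hc Hx Hy) as Hdb. fold bx by' in Hdb.
  pose proof (d_nonneg dI theta M HdI0 HM Htheta x y Hx Hy) as Hdx.
  pose proof (d_nonneg dI theta M HdI0 HM Htheta bx by' Hbx Hby) as Hdb0.
  set (dx := dOmega dI theta x y) in *. set (db := dOmega dI theta bx by') in *.
  pose proof (f_diff k bx by' Hbx Hby (pik_branch k c x) (pik_branch k c y)) as Hf1. fold db in Hf1.
  pose proof hs_nonneg as Hs.
  assert (Hr : rpow db beta <= Rpower eta beta * rpow dx beta).
  { rewrite <- rpow_mult by lra. apply rpow_mono; lra. }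
  pose proof (Rpower_lt1 eta beta Heta ltac:(lra)). pose proof (Rpower_pos eta beta).
  pose proof (rpow_nonneg dx beta).
  set (E := Rpower eta beta) in *. set (r := rpow dx beta) in *.
  assert (HPb : Phi bx <= Bfun hs eta beta (eta * dx) * Phi by').
  { eapply Rle_trans; [apply (HPB bx by' Hbx Hby)|]. fold db. apply Rmult_le_compat_r; [apply HP0; auto|].
    apply Bfun_mono; auto; lra. }
  assert (HBe : Bfun hs eta beta (eta * dx) = exp (hs * (E / (1 - E)) * (E * r))).
  { unfold Bfun. rewrite rpow_mult by lra. reflexivity. }
  rewrite HBe in HPb.
  assert (Hexp : exp (f bx) <= exp (f by' + hs * E * r)).
  { apply exp_le. assert (hs * rpow db beta <= hs * (E * r)) by (apply Rmult_le_compat_l; lra). lra. }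
  assert (HB : Bfun hs eta beta dx = exp (hs * E * r) * exp (hs * (E / (1 - E)) * (E * r))).
  { unfold Bfun. rewrite <- exp_plus. fold E r. f_equal. field. lra. }
  rewrite HB. rewrite exp_plus in Hexp.
  pose proof (HP0 bx Hbx). pose proof (HP0 by' Hby).
  pose proof (exp_pos (f bx)). pose proof (exp_pos (f by')). pose proof (exp_pos (hs * E * r)).
  pose proof (exp_pos (hs * (E / (1 - E)) * (E * r))).
  eapply Rle_trans. { apply Rmult_le_compat; [lra|lra|apply Hexp|apply HPb]. }
  right; ring.
Qed.

Lemma Pk_le Phi k x y : inOmega x -> inOmega y ->
  (forall u, inOmega u -> 0 <= Phi u) ->
  (forall u v, inOmega u -> inOmega v -> Phi u <= Bfun hs eta beta (dOmega dI theta u v) * Phi v) ->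
  Pk b br ptau f k Phi x <= Bfun hs eta beta (dOmega dI theta x y) * Pk b br ptau f k Phi y.
Proof.
  intros Hx Hy HP0 HPB. unfold Pk.
  assert (0 <= / INR b ^ (2 * k + 1)).
  { destruct (Req_dec (INR b ^ (2*k+1)) 0) as [E|E].
    - rewrite E, Rinv_0; lra.
    - left; apply Rinv_0_lt_compat. pose proof (pos_INR b). pose proof (pow_le (INR b) (2*k+1) H). lra. }
  rewrite <- Rmult_assoc, (Rmult_comm _ (/ _)), Rmult_assoc. apply Rmult_le_compat_l; auto.
  rewrite <- sumChoices_scal. apply sumChoices_le. intros c Hc. apply key; auto.
Qed.

Lemma Pk_lower k x m : (1 <= b)%nat -> inOmega x -> (forall u, inOmega u -> m <= f u) ->
  exp m <= Pk b br ptau f k (fun _ => 1) x.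
Proof.
  intros Hb Hx Hm. unfold Pk.
  assert (0 < INR b ^ (2 * k + 1)) by (apply pow_lt; apply lt_0_INR; lia).
  pose proof (sumChoices_lower b (idxk k)
    (fun c => exp (f (branchPt br ptau k c x)) * 1) (exp m)).
  rewrite length_idxk in H0.
  assert (exp m <= / INR b ^ (2 * k + 1) * (INR b ^ (2 * k + 1) * exp m)) by (right; field; lra).
  eapply Rle_trans; [apply H1|]. apply Rmult_le_compat_l; [left; apply Rinv_0_lt_compat; auto|].
  apply H0. intros c Hc. rewrite Rmult_1_r. apply exp_le. apply Hm. apply branchPt_in; auto.
Qed.
End Core.

Theorem mainTheorem4
  (dI : R -> R -> R) (theta : R) (tau : R -> R) (b : nat) (br : nat -> R -> R)
  (ptau eta beta : R) (f : pt -> R) (nu0 : (pt -> Prop) -> R) (lambda : R)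
  (P1 : pt -> R)
  (HdI0 : forall s t, inI s -> inI t -> 0 <= dI s t)
  (HdIeq : forall s t, inI s -> inI t -> (dI s t = 0 <-> s = t))
  (HdIsym : forall s t, inI s -> inI t -> dI s t = dI t s)
  (HdItri : forall s t u, inI s -> inI t -> inI u -> dI s u <= dI s t + dI t u)
  (HdIbd : exists M, forall s t, inI s -> inI t -> dI s t <= M)
  (Htheta : 0 < theta < 1)
  (Htau : forall t, inI t -> inI (tau t))
  (Hb : (1 <= b)%nat)
  (Hbr_in : forall i t, (i < b)%nat -> inI t -> inI (br i t))
  (Hbr_inv : forall i t, (i < b)%nat -> inI t -> tau (br i t) = t)
  (Hbr_cover : forall s, inI s -> exists i, (i < b)%nat /\ br i (tau s) = s)
  (Hbr_inj : forall i j t, (i < b)%nat -> (j < b)%nat -> inI t ->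
                br i t = br j t -> i = j)
  (Hptau : inI ptau /\ tau ptau = ptau)
  (Heta : 0 < eta < 1)
  (Hcontr : forall i s t, (i < b)%nat -> inI s -> inI t ->
               dI (br i s) (br i t) <= eta * dI s t)
  (Hbeta : 0 < beta <= 1)
  (Hf : inCspace dI theta beta ptau f)
  (Hnu0 : probMeasure dI theta nu0)
  (HP1 : forall x, inOmega x -> Un_cv (fun k => Pk b br ptau f k (fun _ => 1) x) (P1 x))
  (Hlambda : integralIs dI theta nu0 P1 lambda)
  (Heig : forall (Phi PPhi : pt -> R) (c : R),
     contOmega dI theta Phi -> boundedOmega Phi ->
     (forall x, inOmega x -> Un_cv (fun k => Pk b br ptau f k Phi x) (PPhi x)) ->
     integralIs dI theta nu0 Phi c ->
     integralIs dI theta nu0 PPhi (lambda * c)) :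
  forall Phi PPhi : pt -> R,
    inDelta dI theta beta ptau eta f nu0 Phi ->
    (forall x, inOmega x -> Un_cv (fun k => Pk b br ptau f k Phi x) (PPhi x)) ->
    inDelta dI theta beta ptau eta f nu0 (fun x => / lambda * PPhi x).
Proof.
  intros Phi PPhi (HPc & HP0 & HPi & HPB) HPP.
  destruct HdIbd as [M HM].
  destruct Hf as (_ & [Mf HMf] & [C HC]).
  destruct Hptau as [Hpt _].
  destruct Hnu0 as (_ & Hnu1 & _).
  pose proof (hs_nonneg dI theta ptau beta C f HC) as Hs. unfold hs in Hs.
  set (s := holderSemi dI theta beta ptau f) in *.
  assert (HBge : forall z, 1 <= Bfun s eta beta z) by (intros; apply Bfun_ge1; lra).
  set (BM := Bfun s eta beta M).
  assert (HBM : forall x y, inOmega x -> inOmega y -> Bfun s eta beta (dOmega dI theta x y) <= BM).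
  { intros x y Hx Hy. apply Bfun_mono; try lra.
    split; [apply (d_nonneg dI theta M)|apply (d_le_M dI theta M)]; auto. }
  assert (HBMp : 0 < BM) by (pose proof (HBge M); unfold BM; lra).
  assert (HQ : forall x y, inOmega x -> inOmega y ->
            PPhi x <= Bfun s eta beta (dOmega dI theta x y) * PPhi y).
  { intros x y Hx Hy. eapply cv_le; [apply HPP; auto|apply HPP; auto|].
    intros n. apply (Pk_le dI theta b br ptau eta beta M C f); auto. }
  assert (HQ0 : forall x, inOmega x -> 0 <= PPhi x).
  { intros x Hx. apply (cv_lower _ _ 0 (HPP x Hx)). intros k. unfold Pk.
    apply Rmult_le_pos.
    - assert (0 < INR b ^ (2 * k + 1)) by (apply pow_lt; apply lt_0_INR; lia).
      left; apply Rinv_0_lt_compat; auto.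
    - pose proof (sumChoices_lower b (idxk k)
        (fun c => exp (f (branchPt br ptau k c x)) * Phi (branchPt br ptau k c x)) 0).
      rewrite Rmult_0_r in H. apply H. intros c Hc.
      apply Rmult_le_pos; [left; apply exp_pos|]. apply HP0.
      apply (branchPt_in b br ptau Hbr_in Hpt k c x); auto. }
  assert (Hlam : 0 < lambda).
  { assert (Hm : forall u, inOmega u -> - Mf <= f u).
    { intros u Hu. specialize (HMf u Hu). pose proof (Rle_abs (- f u)). rewrite Rabs_Ropp in H. lra. }
    assert (exp (- Mf) <= lambda).
    { apply (proj1 (proj2 (proj2 Hlambda))). apply simple_const; auto. left; apply exp_pos.
      intros x Hx. apply (cv_lower _ _ _ (HP1 x Hx)). intros k.
      apply (Pk_lower b br ptau f); auto. }
    pose proof (exp_pos (- Mf)). lra. }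
  assert (HPbd : boundedOmega Phi).
  { exists (BM * 1). intros x Hx. rewrite Rabs_right by (apply Rle_ge; auto).
    apply (integral_bound dI theta nu0 Phi 1 BM); auto.
    intros u v Hu Hv. eapply Rle_trans; [apply (HPB u v Hu Hv)|]. apply Rmult_le_compat_r; auto. }
  pose proof (Heig Phi PPhi 1 HPc HPbd HPP HPi) as HI.
  pose proof (integral_scale dI theta nu0 PPhi (lambda * 1) (/ lambda) HI
     ltac:(apply Rinv_0_lt_compat; auto)) as HI2.
  replace (/ lambda * (lambda * 1)) with 1 in HI2 by (field; lra).
  set (g := fun x => / lambda * PPhi x) in *.
  assert (Hg0 : forall x, inOmega x -> 0 <= g x).
  { intros; unfold g; apply Rmult_le_pos; [left; apply Rinv_0_lt_compat; auto|auto]. }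
  assert (HgB : forall x y, inOmega x -> inOmega y ->
            g x <= Bfun s eta beta (dOmega dI theta x y) * g y).
  { intros x y Hx Hy. unfold g. pose proof (HQ x y Hx Hy).
    apply (Rmult_le_compat_l (/ lambda)) in H; [|left; apply Rinv_0_lt_compat; auto]. lra. }
  assert (Hgbd : forall x, inOmega x -> g x <= BM * 1).
  { apply (integral_bound dI theta nu0 g 1 BM); auto.
    intros u v Hu Hv. eapply Rle_trans; [apply (HgB u v Hu Hv)|]. apply Rmult_le_compat_r; auto. }
  split; [|split; [|split]]; auto.
  apply (cont_from_ineq dI theta s eta beta g (BM * 1)); auto; try lra.
  intros x y Hx Hy. apply (d_sym dI theta M); auto.
Qed.
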